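(* Let $(X,\mathcal A)$ be a measurable space and $h,v:X\to X$ bi-measurable one-to-one maps such that $h(X)$ and $v(X)$ form a partition of $X$. Let $B\in\mathcal A$ be such that $X=\bigcup_{w\in\mathcal M(h,v)}wB$. Then: (1) if $\mu,\nu$ are two $\{h,v\}$-invariant measures on $X$ that are equal on $B$, then $\mu=\nu$ on $X$; (2) every measure that is $\mathcal M(h,v)$-invariant on $B$ is the restriction to $B$ of an $\mathcal M(h,v)$-invariant measure on $X$; (3) if $h(X\setminus B)\cap B=v(X\setminus B)\cap B=\emptyset$, then every measure that is $\{h,v\}$-invariant on $B$ is the restriction to $B$ of an $\mathcal M(h,v)$-invariant measure on $X$.
   Context: A map $g:X\to X$ is bi-measurable if it is measurable and $gA\in\mathcal A$ for all $A\in\mathcal A$. $\mathcal M(h,v)$ is the monoid generated by $h,v$ under composition, containing the identity. For a set $E$ of bi-measurable one-to-one maps and $B\in\mathcal A$, a measure $\mu$ on the measurable subsets of $B$ is $E$-invariant on $B$ if for all measurable $A\subset B$ and all $g\in E$, $gA\subset B$ implies $\mu(gA)=\mu(A)$. A measure on $X$ is $E$-invariant if it is $E$-invariant on $B=X$. *)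

(* Defs.v *)
From HB Require Import structures.
From mathcomp Require Import all_boot all_order all_algebra.
From mathcomp Require Import all_classical all_reals all_analysis.
Set Implicit Arguments. Unset Strict Implicit. Unset Printing Implicit Defensive.
Import Order.TTheory GRing.Theory Num.Theory.
Local Open Scope classical_set_scope.
Local Open Scope ring_scope.

Section Defs.
Context {d : measure_display} {T : measurableType d} {R : realType}.

Definition bimeasurable (g : T -> T) : Prop :=
  measurable_fun setT g /\ (forall A, measurable A -> measurable (g @` A)).

Inductive monoid_gen (h v : T -> T) : (T -> T) -> Prop :=
  | mg_id : monoid_gen h v id
  | mg_h w : monoid_gen h v w -> monoid_gen h v (h \o w)
  | mg_v w : monoid_gen h v w -> monoid_gen h v (v \o w).

Definition pair_maps (h v : T -> T) : set (T -> T) := [set h; v].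

(* mu is a measure on the measurable subsets of B (its values elsewhere are
   irrelevant) *)
Definition measure_on (B : set T) (mu : set T -> \bar R) : Prop :=
  [/\ mu set0 = 0%E,
      (forall A, measurable A -> A `<=` B -> (0 <= mu A)%E) &
      (forall F : nat -> set T, (forall n, measurable (F n)) ->
         (forall n, F n `<=` B) -> trivIset setT F ->
         (fun n => (\sum_(0 <= i < n) mu (F i))%E) @ \oo --> mu (\bigcup_n F n))].

Definition invariant_on (E : set (T -> T)) (B : set T) (mu : set T -> \bar R)
  : Prop :=
  forall A, measurable A -> A `<=` B -> forall g, E g ->
    g @` A `<=` B -> mu (g @` A) = mu A.

End Defs.

(* Main.v *)
Require Import Defs.
From HB Require Import structures.
From mathcomp Require Import all_boot all_order all_algebra.
From mathcomp Require Import all_classical all_reals all_analysis.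
Import Order.TTheory GRing.Theory Num.Theory.
Local Open Scope classical_set_scope.
Local Open Scope ring_scope.

Module L8aux.
Set Implicit Arguments. Unset Strict Implicit.

Section Words.
Context d (T : measurableType d) (R : realType) (h v : T -> T).
Hypotheses (bh : bimeasurable h) (bv : bimeasurable v)
  (ih : injective h) (iv : injective v) (hv0 : range h `&` range v = set0).

Definition lt (b : bool) := if b then h else v.
Fixpoint wf (s : seq bool) : T -> T :=
  match s with [::] => id | b :: s => lt b \o wf s end.

Lemma wf_cat s t : wf (s ++ t) = wf s \o wf t.
Proof. by elim: s => //= b s ->. Qed.

Lemma lt_inj b : injective (lt b). Proof. by case: b. Qed.
Lemma lt_bim b : bimeasurable (lt b). Proof. by case: b. Qed.

Lemma wf_inj s : injective (wf s).
Proof. elim: s => //= b s IH x y /lt_inj; exact: IH. Qed.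

Lemma wf_mfun s : measurable_fun setT (wf s).
Proof.
elim: s => [|b s IH] /=; first exact: measurable_id.
apply: measurableT_comp => //; exact: (lt_bim b).1.
Qed.

Lemma wf_mimg s A : measurable A -> measurable (wf s @` A).
Proof.
elim: s => [|b s IH] /= mA; first by rewrite image_id.
rewrite -image_comp; apply: (lt_bim b).2; exact: IH.
Qed.

Lemma wf_pre s A : measurable A -> measurable (wf s @^-1` A).
Proof. by move=> mA; rewrite -[X in measurable X]setTI; apply: wf_mfun. Qed.

Lemma monoid_wf w : monoid_gen h v w -> exists s, w = wf s.
Proof.
elim => [|w0 _ [s ->]|w0 _ [s ->]]; first by exists [::].
  by exists (true :: s).
by exists (false :: s).
Qed.

Lemma wf_monoid s : monoid_gen h v (wf s).
Proof. elim: s => [|[] s IH] /=; [exact: mg_id|exact: mg_h|exact: mg_v]. Qed.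

Lemma lt_disj a b x y : lt a x = lt b y -> a = b.
Proof.
case: a; case: b => //= E.
- have : (range h `&` range v) (h x) by split; [exists x|exists y].
  by rewrite hv0.
- have : (range h `&` range v) (h y) by split; [exists y|exists x].
  by rewrite hv0.
Qed.

Lemma prefix u w x y : wf u x = wf w y ->
  (exists s, u = w ++ s /\ wf s x = y) \/ (exists s, w = u ++ s /\ wf s y = x).
Proof.
elim: u w => [|a u IH] [|b w] /= E.
- by left; exists [::].
- by right; exists (b :: w).
- by left; exists (a :: u).
- have ab := lt_disj E; subst b.
  have /IH [[s [-> <-]]|[s [-> <-]]] := lt_inj E.
  + by left; exists s.
  + by right; exists s.
Qed.

Lemma drop_lemma u w x y : wf u x = wf w y -> (size w <= size u)%N ->
  wf (drop (size w) u) x = y.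
Proof.
move=> /prefix [[s [-> <-]]|[s [-> <-]]] sz.
  by rewrite drop_size_cat.
move: sz; rewrite size_cat -{2}(addn0 (size u)) leq_add2l leqn0 => /nilP ->.
by rewrite addn0 drop_size.
Qed.

Lemma transfer (mu : set T -> \bar R) B :
  invariant_on (monoid_gen h v) B mu -> forall u w P Q,
  measurable P -> measurable Q -> P `<=` B -> Q `<=` B ->
  wf u @` P = wf w @` Q -> mu P = mu Q.
Proof.
move=> inv u w P Q mP mQ PB QB.
wlog sz : u w P Q mP mQ PB QB / (size w <= size u)%N.
  move=> H E; case: (leqP (size w) (size u)) => s; first exact: (H u w P Q).
  by symmetry; apply: (H w u Q P) => //; apply: ltnW.
move=> E.
have -> : Q = wf (drop (size w) u) @` P.
  apply/seteqP; split => [q Qq|_ [p Pp <-]].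
  - have : (wf u @` P) (wf w q) by rewrite E; exists q.
    case=> p Pp Ep; exists p => //; exact: drop_lemma Ep sz.
  - have : (wf w @` Q) (wf u p) by rewrite -E; exists p.
    case=> q Qq Eq; by rewrite (drop_lemma (esym Eq) sz).
symmetry; apply: (inv P mP PB _ (wf_monoid _)).
move=> _ [p Pp <-]; apply: QB.
have : (wf w @` Q) (wf u p) by rewrite -E; exists p.
by case=> q Qq Eq; rewrite (drop_lemma (esym Eq) sz).
Qed.

End Words.

Lemma trivIset_img T U (f : T -> U) (F : nat -> set T) : injective f ->
  trivIset setT F -> trivIset setT (fun i => f @` F i).
Proof.
move=> inj tF i j _ _ [x [[a Fa <-] [b Fb e]]]; apply: tF => //.
by exists a; split => //; rewrite -(inj _ _ e).
Qed.

Lemma trivIset_pre T U (f : T -> U) (F : nat -> set U) :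
  trivIset setT F -> trivIset setT (fun i => f @^-1` F i).
Proof. by move=> tF i j _ _ [x [Fi Fj]]; apply: tF => //; exists (f x). Qed.

Lemma img_preI T U (f : T -> U) C X : f @` (C `&` f @^-1` X) = f @` C `&` X.
Proof.
apply/seteqP; split => [_ [x [Cx Xx] <-]|_ [[x Cx <-] Xx]]; first by split => //; exists x.
by exists x.
Qed.

Section Decomp.
Context d (T : measurableType d) (R : realType) (h v : T -> T).
Hypotheses (bh : bimeasurable h) (bv : bimeasurable v)
  (ih : injective h) (iv : injective v) (hv0 : range h `&` range v = set0).
Variable B : set T.
Hypothesis mB : measurable B.
Hypothesis cover : forall x : T, exists w, monoid_gen h v w /\ exists2 b, B b & w b = x.

Definition word n : seq bool := odflt [::] (unpickle n).
Definition W n := wf h v (word n).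
Definition D := seqDU (fun n => W n @` B).

Lemma mD n : measurable (D n).
Proof. by apply: seqDU_measurable => k; apply: (wf_mimg bh bv). Qed.

Lemma tD : trivIset setT D.
Proof. exact: trivIset_seqDU. Qed.

Lemma covD : \bigcup_n D n = setT.
Proof.
rewrite -seqDU_bigcup_eq; apply/seteqP; split => // x _.
have [w [mw [b Bb <-]]] := cover x.
have [s ->] := monoid_wf mw.
exists (pickle s) => //; rewrite /W /word pickleK /=; by exists b.
Qed.

Lemma D_sub n : D n `<=` W n @` B.
Proof. by move=> x []. Qed.

Definition E n A := W n @^-1` (A `&` D n).

Lemma E_sub n A : E n A `<=` B.
Proof.
move=> y [_ /D_sub [b Bb]] /(@wf_inj _ _ h v ih iv) <- //.
Qed.

Lemma E_img n A : W n @` E n A = A `&` D n.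
Proof.
apply/seteqP; split => [_ [y Ey <-]|x [Ax Dx]] //.
have [b Bb e] := D_sub Dx; exists b => //; rewrite /E /= e; by split.
Qed.

Lemma mE n A : measurable A -> measurable (E n A).
Proof. by move=> mA; apply: (wf_pre bh bv); apply: measurableI => //; apply: mD. Qed.

Lemma decomp (mu : {measure set T -> \bar R}) A : measurable A ->
  mu A = (\sum_(k <oo) mu (A `&` D k))%E.
Proof.
move=> mA; rewrite -{1}(setIT A) -covD setI_bigcupr measure_semi_bigcup //.
- by move=> k; apply: measurableI => //; apply: mD.
- by apply: trivIset_setIl; apply: tD.
- by rewrite -setI_bigcupr covD setIT.
Qed.

Lemma inv_word (mu : {measure set T -> \bar R}) :
  invariant_on (pair_maps h v) setT mu ->
  forall s A, measurable A -> mu (wf h v s @` A) = mu A.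
Proof.
move=> inv; elim => [|b s IH] A mA /=; first by rewrite image_id.
rewrite -image_comp (inv (wf h v s @` A)) //; first exact: IH.
- exact: wf_mimg.
- by case: b; [left|right].
Qed.

Lemma part1 (mu nu : {measure set T -> \bar R}) :
  invariant_on (pair_maps h v) setT mu ->
  invariant_on (pair_maps h v) setT nu ->
  (forall A, measurable A -> A `<=` B -> mu A = nu A) ->
  forall A, measurable A -> mu A = nu A.
Proof.
move=> imu inu eq A mA; rewrite (decomp mu mA) (decomp nu mA).
apply: eq_eseriesr => k _; rewrite -E_img /W !inv_word //; try exact: mE.
by apply: eq; [exact: mE|exact: E_sub].
Qed.

End Decomp.

Section Part2.
Context d (T : measurableType d) (R : realType) (h v : T -> T).
Hypotheses (bh : bimeasurable h) (bv : bimeasurable v)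
  (ih : injective h) (iv : injective v) (hv0 : range h `&` range v = set0).
Variable B : set T.
Hypothesis mB : measurable B.
Hypothesis cover : forall x : T, exists w, monoid_gen h v w /\ exists2 b, B b & w b = x.
Variable mu : set T -> \bar R.
Hypothesis Hmu : measure_on B mu.
Hypothesis Hinv : invariant_on (monoid_gen h v) B mu.

Definition muB (A : set T) : \bar R :=
  if `[< measurable A >] then mu (A `&` B) else 0%E.

Lemma muBE A : measurable A -> muB A = mu (A `&` B).
Proof. by move=> mA; rewrite /muB asboolT. Qed.

Let muB0 : muB set0 = 0%E.
Proof. by rewrite muBE // set0I; case: Hmu. Qed.

Let muB_ge0 A : (0 <= muB A)%E.
Proof.
rewrite /muB; case: asboolP => // mA; case: Hmu => _ ge0 _.
by apply: ge0; [apply: measurableI|apply: subIsetr].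
Qed.

Let muB_sa : semi_sigma_additive muB.
Proof.
move=> F mF tF mU; rewrite muBE // setI_bigcupl.
have -> : (fun n => (\sum_(0 <= i < n) muB (F i))%E) =
          (fun n => (\sum_(0 <= i < n) mu (F i `&` B))%E).
  by apply/funext => n; apply: eq_bigr => i _; rewrite muBE.
case: Hmu => _ _ sa; apply: sa.
- by move=> n; apply: measurableI.
- by move=> n; apply: subIsetr.
- exact: trivIset_setIr.
Qed.

HB.instance Definition _ := isMeasure.Build _ _ _ muB muB0 muB_ge0 muB_sa.

Definition nuF n : {measure set T -> \bar R} :=
  mrestr (measure_function_pushforward__canonical__measure_function_Measure
            [the measure _ _ of muB] (wf_mfun bh bv (word n)))
         (mD bh bv mB n).

Definition nu : {measure set T -> \bar R} := mseries nuF 0.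

Lemma nuE A : measurable A -> nu A = (\sum_(0 <= k <oo) mu (E h v B k A))%E.
Proof.
move=> mA; rewrite /nu /mseries /=.
apply: eq_eseriesr => k _ /=; rewrite /mrestr /pushforward muBE.
  by rewrite setIidl //; apply: E_sub.
exact: mE.
Qed.


Lemma nu_img s C : measurable C -> C `<=` B -> nu (wf h v s @` C) = mu C.
Proof.
move=> mC CB; rewrite nuE; last exact: (wf_mimg bh bv).
pose Ck k := C `&` wf h v s @^-1` D h v B k.
have mCk k : measurable (Ck k).
  by apply: measurableI => //; apply: (wf_pre bh bv); apply: (mD bh bv mB).
have -> : mu C = (\sum_(0 <= k <oo) mu (Ck k))%E.
  case: Hmu => _ _ sa.
  have := sa Ck mCk (fun k => subset_trans (@subIsetl _ _ _) CB).
  have -> : \bigcup_k Ck k = C.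
    by rewrite /Ck -setI_bigcupr -preimage_bigcup (covD cover) preimage_setT setIT.
  move=> H; apply/esym/cvg_lim => //; apply: H.
  apply: trivIset_setIl; apply: trivIset_pre; exact: tD.
apply: eq_eseriesr => k _.
apply: (transfer ih iv hv0 Hinv (u:=word k) (w:=s)).
- by apply: (mE bh bv mB); apply: (wf_mimg bh bv).
- exact: mCk.
- exact: E_sub.
- exact: subset_trans (@subIsetl _ _ _) CB.
- by rewrite E_img /Ck img_preI.
Qed.

Lemma nu_restr A : measurable A -> A `<=` B -> nu A = mu A.
Proof. by move=> mA AB; rewrite -(nu_img [::] mA AB) /= image_id. Qed.

Lemma nu_inv : invariant_on (monoid_gen h v) setT nu.
Proof.
move=> A mA _ g /monoid_wf [u ->] _.
rewrite (nuE mA).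
pose F k := wf h v (u ++ word k) @` E h v B k A.
have eqF k : F k = wf h v u @` (A `&` D h v B k).
  by rewrite /F wf_cat -image_comp E_img.
have eqU : wf h v u @` A = \bigcup_k F k.
  rewrite -{1}(setIT A) -(covD cover) setI_bigcupr image_bigcup.
  by apply: eq_bigcupr => k _; rewrite eqF.
rewrite eqU measure_semi_bigcup.
- apply: eq_eseriesr => k _; apply: nu_img; first by apply: (mE bh bv mB).
  exact: E_sub.
- by move=> k; apply: (wf_mimg bh bv); apply: (mE bh bv mB).
- have -> : F = fun k => wf h v u @` (A `&` D h v B k) by apply/funext => k; apply: eqF.
  apply: trivIset_img; first exact: (wf_inj ih iv).
  apply: trivIset_setIl; exact: tD.
- by rewrite -eqU; apply: (wf_mimg bh bv).
Qed.

Lemma part2 : exists nu : {measure set T -> \bar R},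
  invariant_on (monoid_gen h v) setT nu /\
  forall A, measurable A -> A `<=` B -> nu A = mu A.
Proof. exists nu; split; [exact: nu_inv | exact: nu_restr]. Qed.

End Part2.

Unset Implicit Arguments.
Lemma pair_to_monoid d (T : measurableType d) (R : realType) (h v : T -> T)
  (bh : bimeasurable h) (bv : bimeasurable v) (B : set T) (mu : set T -> \bar R) :
  h @` (~` B) `&` B = set0 -> v @` (~` B) `&` B = set0 ->
  invariant_on (pair_maps h v) B mu -> invariant_on (monoid_gen h v) B mu.
Proof.
move=> hB vB inv A mA AB g /monoid_wf [s ->].
elim: s => [|b s IH] /=; first by rewrite image_id.
rewrite -image_comp => sub.
have sB : wf h v s @` A `<=` B.
  move=> y Ay; apply: contrapT => nBy.
  case: b sub => /= sub.
  - have : ((h @` (~` B)) `&` B) (h y) by split; [by exists y|by apply: sub; exists y].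
    by rewrite hB.
  - have : ((v @` (~` B)) `&` B) (v y) by split; [by exists y|by apply: sub; exists y].
    by rewrite vB.
rewrite (inv _ (wf_mimg bh bv s mA) sB (lt h v b)) //; first exact: IH.
by case: b {sub}; [left|right].
Qed.

End L8aux.
Import L8aux.

Theorem lemma8 (d : measure_display) (T : measurableType d) (R : realType)
  (h v : T -> T) (B : set T) :
  bimeasurable h -> bimeasurable v -> injective h -> injective v ->
  range h `&` range v = set0 -> range h `|` range v = setT ->
  measurable B ->
  (forall x : T, exists w, monoid_gen h v w /\ exists2 b, B b & w b = x) ->
  [/\ (* (1) *)
      (forall mu nu : {measure set T -> \bar R},
         invariant_on (pair_maps h v) setT mu ->
         invariant_on (pair_maps h v) setT nu ->
         (forall A, measurable A -> A `<=` B -> mu A = nu A) ->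
         forall A, measurable A -> mu A = nu A),
      (* (2) *)
      (forall mu : set T -> \bar R, measure_on B mu ->
         invariant_on (monoid_gen h v) B mu ->
         exists nu : {measure set T -> \bar R},
           invariant_on (monoid_gen h v) setT nu /\
           forall A, measurable A -> A `<=` B -> nu A = mu A) &
      (* (3) *)
      (h @` (~` B) `&` B = set0 -> v @` (~` B) `&` B = set0 ->
       forall mu : set T -> \bar R, measure_on B mu ->
         invariant_on (pair_maps h v) B mu ->
         exists nu : {measure set T -> \bar R},
           invariant_on (monoid_gen h v) setT nu /\
           forall A, measurable A -> A `<=` B -> nu A = mu A)].
Proof.
move=> bh bv ih iv hv0 _ mB cover; split.
- move=> mu nu; exact: (part1 bh bv ih iv mB cover).
- move=> mu Hmu Hinv; exact: (part2 bh bv ih iv hv0 mB cover Hmu Hinv).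
- move=> hB vB mu Hmu Hinv.
  exact: (part2 bh bv ih iv hv0 mB cover Hmu (@pair_to_monoid _ _ _ _ _ bh bv _ _ hB vB Hinv)).
Qed.
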